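(* $\Sigma[3]=\bigcup_{n\ge0}(\mathcal S_n[3]\cup\mathcal S'_n[3])=\mathcal S[3]\cap V_{\mathcal R}=\Sigma\cap V$, where $V_{\mathcal R}=V\cap\mathcal R^4$ and $\mathcal S[3]$ is the unit sphere of $V$.
   Context: Let $\tau=(1+\sqrt5)/2$, $\tau'=(1-\sqrt5)/2$, $\mathcal R=\mathbb{Z}[\frac12,\tau]$. Let $\Delta\subset\mathbb{R}^4$ be the set of 120 vectors consisting of: the 8 vectors obtained from $(\pm1,0,0,0)$ by permuting coordinates; the 16 vectors $\frac12(\pm1,\pm1,\pm1,\pm1)$; and the 96 vectors obtained from $\frac12(0,\pm1,\pm\tau',\pm\tau)$ (all sign choices) by even permutations of the coordinates; $\Delta'$ is its image under $\tau\leftrightarrow\tau'$ in each coordinate. For a unit vector $a$, $r_a(x)=x-2(x\cdot a)a$; $H^\infty$ is generated by $r_a$, $a\in\Delta\cup\Delta'$, and $\Sigma=H^\infty(\Delta\cup\Delta')$. Let $V=\{x\in\mathbb{R}^4:x_1=0\}$, $\Delta[3]=\Delta\cap V$, $\Delta[3]'=\Delta'\cap V$, $H^\infty[3]$ the group of orthogonal maps of $V$ generated by the reflections $r_a$, $a\in\Delta[3]\cup\Delta[3]'$, and $\Sigma[3]=H^\infty[3](\Delta[3]\cup\Delta[3]')$. Identify $V$ with $\mathbb{R}^3$ via the last three coordinates. Let $\mathbb F_4=\mathbb{Z}[\tau]/2\mathbb{Z}[\tau]$ with coordinatewise reduction $y\mapsto\bar y$. For $n\ge1$, $\mathcal S_n[3]=\{x\in2^{-n}\mathbb{Z}[\tau]^3: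 x\cdot x=1,\ \overline{2^nx}\in\{(\bar1,\bar{\tau'},\bar\tau),(\bar{\tau'},\bar\tau,\bar1),(\bar\tau,\bar1,\bar{\tau'})\}\}$, $\mathcal S'_n[3]$ the same with $\bar\tau,\bar{\tau'}$ interchanged, and $\mathcal S_0[3]=\mathcal S'_0[3]=\{(\pm1,0,0),(0,\pm1,0),(0,0,\pm1)\}$. *)

(* Defs.v *)
(* The ambient field is an arbitrary real closed field R
   (e.g. the real numbers); all objects involved live in Q(sqrt 5)^4. *)
From HB Require Import structures.
From mathcomp Require Import all_boot all_order all_algebra all_fingroup.
Set Implicit Arguments. Unset Strict Implicit. Unset Printing Implicit Defensive.
Import Order.TTheory GRing.Theory Num.Theory.
Local Open Scope ring_scope.

Section Defs.
Variable R : rcfType.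
Local Notation vec := 'rV[R]_4.

Definition tau : R := (1 + Num.sqrt 5) / 2.
Definition tau' : R := (1 - Num.sqrt 5) / 2.

(* coordinates x_1,...,x_4 of the paper are x 0 0, ..., x 0 3 *)
Definition dot (x y : vec) : R := \sum_(i < 4) x 0 i * y 0 i.

Definition refl (a x : vec) : vec := x - (2 * dot x a) *: a.

Definition sgn (b : bool) : R := (-1) ^+ b.
Definition unitv (i : 'I_4) : vec := \row_j (if j == i then 1 else 0).

(* Delta_gen t t' : the 120 vectors, with tau' and tau replaced by t' and t *)
Definition Delta_gen (t t' : R) (v : vec) : Prop :=
  (exists (i : 'I_4) (b : bool), v = sgn b *: unitv i) \/
  (exists s : 'I_4 -> bool, v = \row_j (sgn (s j) / 2)) \/
  (exists (p : 'S_4) (b1 b2 b3 : bool), ~~ odd_perm p /\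
     v = \row_j (nth 0 [:: 0; sgn b1; sgn b2 * t'; sgn b3 * t] (p j) / 2)).

Definition Delta := Delta_gen tau tau'.
Definition Delta' := Delta_gen tau' tau.

(* group generated by the reflections r_a, a in G (they are involutions,
   so words in the generators form the generated group) *)
Inductive gen_by (G : vec -> Prop) : (vec -> vec) -> Prop :=
| gen_id : gen_by G id
| gen_step a g : G a -> gen_by G g -> gen_by G (refl a \o g).

Definition orbit (G S0 : vec -> Prop) (x : vec) : Prop :=
  exists g y, gen_by G g /\ S0 y /\ x = g y.

Definition DeltaU (v : vec) : Prop := Delta v \/ Delta' v.
Definition Hinf := gen_by DeltaU.
Definition Sigma := orbit DeltaU DeltaU.

Definition inV (x : vec) : Prop := x 0 0 = 0.

Definition Delta3 (v : vec) : Prop := Delta v /\ inV v.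
Definition Delta3' (v : vec) : Prop := Delta' v /\ inV v.
Definition Delta3U (v : vec) : Prop := Delta3 v \/ Delta3' v.
Definition Hinf3 := gen_by Delta3U.
Definition Sigma3 := orbit Delta3U Delta3U.

Inductive inZtau : R -> Prop :=
| zt_one : inZtau 1
| zt_tau : inZtau tau
| zt_opp x : inZtau x -> inZtau (- x)
| zt_add x y : inZtau x -> inZtau y -> inZtau (x + y)
| zt_mul x y : inZtau x -> inZtau y -> inZtau (x * y).

Inductive inRR : R -> Prop :=
| rr_one : inRR 1
| rr_half : inRR (1 / 2)
| rr_tau : inRR tau
| rr_opp x : inRR x -> inRR (- x)
| rr_add x y : inRR x -> inRR y -> inRR (x + y)
| rr_mul x y : inRR x -> inRR y -> inRR (x * y).

Definition eq_mod2 (y c : R) : Prop := exists z, inZtau z /\ y - c = 2 * z.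

(* residue patterns (in F_4) for S_n[3] *)
Definition pat (t t' : R) : seq (R * R * R) :=
  [:: (1, t', t); (t', t, 1); (t, 1, t')].

(* S_n[3] (identified with a subset of V via the last three coordinates),
   with residue pattern P *)
Definition Sn_gen (P : seq (R * R * R)) (n : nat) (x : vec) : Prop :=
  if n is 0 then
    exists (i : 'I_4) (b : bool), i != 0 /\ x = sgn b *: unitv i
  else
    inV x /\ dot x x = 1 /\
    (forall j : 'I_4, j != 0 -> inZtau (2 ^+ n * x 0 j)) /\
    exists c1 c2 c3, (c1, c2, c3) \in P /\
      eq_mod2 (2 ^+ n * x 0 (inord 1)) c1 /\
      eq_mod2 (2 ^+ n * x 0 (inord 2)) c2 /\
      eq_mod2 (2 ^+ n * x 0 (inord 3)) c3.

Definition S3 := Sn_gen (pat tau tau').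
Definition S3' := Sn_gen (pat tau' tau).

Definition sphereV_R (x : vec) : Prop :=
  inV x /\ dot x x = 1 /\ forall i : 'I_4, inRR (x 0 i).

End Defs.

(* Main.v *)
Require Import Defs.
From HB Require Import structures.
From mathcomp Require Import all_boot all_order all_algebra all_fingroup.
From mathcomp Require Import zify ring lra.
Set Implicit Arguments. Unset Strict Implicit. Unset Printing Implicit Defensive.
Import Order.TTheory GRing.Theory Num.Theory.
Local Open Scope ring_scope.


Section Gen.
Variable T : comNzRingType.
Definition pm (p q : T * T) : T * T :=
  (p.1*q.1 + p.2*q.2, p.1*q.2 + p.2*q.1 + p.2*q.2).
Definition pa (p q : T * T) : T * T := (p.1+q.1, p.2+q.2).
Definition ps (p q : T * T) : T * T := (p.1-q.1, p.2-q.2).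
Definition nrm3 (y1 y2 y3 : T * T) := pa (pa (pm y1 y1) (pm y2 y2)) (pm y3 y3).
Definition dot3 (y1 y2 y3 b1 b2 b3 : T * T) := pa (pa (pm y1 b1) (pm y2 b2)) (pm y3 b3).
Definition cone : T * T := (1, 0).
Definition ctau : T * T := (0, 1).
Definition ctau' : T * T := (1, -1).
Definition cz : T * T := (0, 0).
Definition sgnp (s : bool) (p : T * T) : T * T := if s then (- p.1, - p.2) else p.
Definition qk (k j : nat) : nat :=
  match k, j with
  | 1, 1 => 2 | 1, 2 => 3 | 1, 3 => 1
  | 2, 1 => 3 | 2, 2 => 1 | 2, 3 => 2
  | _, _ => j end.
Definition wl (d s1 s2 s3 : bool) : seq (T * T) :=
  [:: cz; sgnp s1 cone; sgnp s2 (if d then ctau else ctau'); sgnp s3 (if d then ctau' else ctau)].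
Definition bv (d : bool) (k : nat) s1 s2 s3 (j : nat) : T * T := nth cz (wl d s1 s2 s3) (qk k j).
Definition patv (d : bool) (k : nat) (j : nat) : T * T := bv d k false false false j.
End Gen.
Arguments cone {T}. Arguments ctau {T}. Arguments ctau' {T}. Arguments cz {T}.
Arguments wl {T}. Arguments bv {T}. Arguments patv {T}.

Definition ev (z : int) := (2 %| z)%Z.
Definition evp (p : int * int) := ev p.1 && ev p.2.
Definition d4p (p : int * int) := (4 %| p.1)%Z && (4 %| p.2)%Z.
Definition P4 := (int * int)%type.
Definition Z4l : seq int := [:: 0; 1; 2; 3].
Definition P4l : seq P4 := [seq (a, b) | a <- Z4l, b <- Z4l].
Definition bl := [:: false; true].

Definition F1fin := all (fun y1 => all (fun y2 => all (fun y3 =>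
  (d4p (nrm3 y1 y2 y3) && ~~ [&& evp y1, evp y2 & evp y3]) ==>
  has (fun d => has (fun k =>
     [&& evp (ps y1 (patv d k 1)), evp (ps y2 (patv d k 2)) & evp (ps y3 (patv d k 3))]) (iota 0 3)) bl) P4l) P4l) P4l.

Lemma F1finP : F1fin = true.
Proof. vm_compute. reflexivity. Qed.

Definition halfp (w : int * int) : int * int := ((w.1 %/ 2)%Z, (w.2 %/ 2)%Z).
Definition F2fin := all (fun y1 => all (fun y2 => all (fun y3 =>
  (d4p (nrm3 y1 y2 y3) && ~~ [&& evp y1, evp y2 & evp y3]) ==>
  has (fun d => has (fun k => has (fun s1 => has (fun s2 => has (fun s3 =>
    let b1 := bv d k s1 s2 s3 1 in let b2 := bv d k s1 s2 s3 2 in let b3 := bv d k s1 s2 s3 3 in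
    let w := dot3 y1 y2 y3 b1 b2 b3 in let u := halfp w in
    [&& evp w, evp (ps y1 (pm u b1)), evp (ps y2 (pm u b2)) & evp (ps y3 (pm u b3))]) bl) bl) bl) (iota 0 3)) bl) P4l) P4l) P4l.

Lemma F2finP : F2fin = true.
Proof. vm_compute. reflexivity. Qed.

Lemma F1finL y1 y2 y3 : y1 \in P4l -> y2 \in P4l -> y3 \in P4l ->
  (d4p (nrm3 y1 y2 y3) && ~~ [&& evp y1, evp y2 & evp y3]) ->
  has (fun d => has (fun k =>
     [&& evp (ps y1 (patv d k 1)), evp (ps y2 (patv d k 2)) & evp (ps y3 (patv d k 3))]) (iota 0 3)) bl.
Proof.
move=> m1 m2 m3; have H := F1finP; rewrite /F1fin in H.
move/allP: H => /(_ y1 m1) /allP /(_ y2 m2) /allP /(_ y3 m3) /implyP; exact.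
Qed.

Lemma F2finL y1 y2 y3 : y1 \in P4l -> y2 \in P4l -> y3 \in P4l ->
  (d4p (nrm3 y1 y2 y3) && ~~ [&& evp y1, evp y2 & evp y3]) ->
  has (fun d => has (fun k => has (fun s1 => has (fun s2 => has (fun s3 =>
    let b1 := bv d k s1 s2 s3 1 in let b2 := bv d k s1 s2 s3 2 in let b3 := bv d k s1 s2 s3 3 in
    let w := dot3 y1 y2 y3 b1 b2 b3 in let u := halfp w in
    [&& evp w, evp (ps y1 (pm u b1)), evp (ps y2 (pm u b2)) & evp (ps y3 (pm u b3))]) bl) bl) bl) (iota 0 3)) bl.
Proof.
move=> m1 m2 m3; have H := F2finP; rewrite /F2fin in H.
move/allP: H => /(_ y1 m1) /allP /(_ y2 m2) /allP /(_ y3 m3) /implyP; exact.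
Qed.

Definition cong (m : int) (p q : int * int) := (m %| p.1 - q.1)%Z /\ (m %| p.2 - q.2)%Z.

Lemma dvdD2 (m a a' b b' : int) : (m %| a - a')%Z -> (m %| b - b')%Z -> (m %| (a + b) - (a' + b'))%Z.
Proof. move=> h1 h2. have -> : (a + b) - (a' + b') = (a - a') + (b - b') by ring. by rewrite rpredD. Qed.
Lemma dvdB2 (m a a' b b' : int) : (m %| a - a')%Z -> (m %| b - b')%Z -> (m %| (a - b) - (a' - b'))%Z.
Proof. move=> h1 h2. have -> : (a - b) - (a' - b') = (a - a') - (b - b') by ring. by rewrite rpredB. Qed.
Lemma dvdM2 (m a a' b b' : int) : (m %| a - a')%Z -> (m %| b - b')%Z -> (m %| (a * b) - (a' * b'))%Z.
Proof. move=> h1 h2. have -> : (a * b) - (a' * b') = a * (b - b') + (a - a') * b' by ring.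
by apply: rpredD; [apply: dvdz_mull | apply: dvdz_mulr]. Qed.

Lemma cong_refl m p : cong m p p. Proof. by split; rewrite subrr; apply: rpred0. Qed.
Lemma cong_pa m p p' q q' : cong m p p' -> cong m q q' -> cong m (pa p q) (pa p' q').
Proof. by move=> [h1 h2] [h3 h4]; split; apply: dvdD2. Qed.
Lemma cong_ps m p p' q q' : cong m p p' -> cong m q q' -> cong m (ps p q) (ps p' q').
Proof. by move=> [h1 h2] [h3 h4]; split; apply: dvdB2. Qed.
Lemma cong_pm m p p' q q' : cong m p p' -> cong m q q' -> cong m (pm p q) (pm p' q').
Proof. by move=> [h1 h2] [h3 h4]; split; rewrite /=; repeat apply: dvdD2; apply: dvdM2. Qed.
Lemma cong42 p q : cong 4 p q -> cong 2 p q.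
Proof. by move=> [h1 h2]; split; apply: dvdz_trans h1 + apply: dvdz_trans h2. Qed.

Lemma dvd_cong (m a a' : int) : (m %| a - a')%Z -> (m %| a)%Z = (m %| a')%Z.
Proof.
move=> h; apply/idP/idP => h'.
  have -> : a' = a - (a - a') by ring.
  by apply: rpredB.
have -> : a = (a - a') + a' by ring.
by apply: rpredD.
Qed.
Lemma evp_cong p q : cong 2 p q -> evp p = evp q.
Proof. by move=> [h1 h2]; rewrite /evp /ev (dvd_cong h1) (dvd_cong h2). Qed.
Lemma d4p_cong p q : cong 4 p q -> d4p p = d4p q.
Proof. by move=> [h1 h2]; rewrite /d4p (dvd_cong h1) (dvd_cong h2). Qed.

Lemma red4 (y : int) : exists2 y', y' \in Z4l & (4 %| y - y')%Z.
Proof.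
exists (y %% 4)%Z; last first.
  rewrite {1}(divz_eq y 4) addrK; apply: dvdz_mull; exact: dvdzz.
have h0 := modz_ge0 y (d:=4) isT; have h1 := ltz_mod y (d:=4) isT.
move: h0 h1; case: (y %% 4)%Z => // n _.
by case: n => [|[|[|[|n]]]].
Qed.
Lemma red4p (p : int * int) : exists2 p', p' \in P4l & cong 4 p p'.
Proof.
case: p => a b; case: (red4 a) => a' ha' h1; case: (red4 b) => b' hb' h2.
by exists (a', b'); [apply: allpairs_f | split].
Qed.

Lemma evp_ps_cong (c y y' : int * int) : cong 2 y y' -> evp (ps y c) = evp (ps y' c).
Proof. by move=> h; apply: evp_cong; apply: cong_ps => //; apply: cong_refl. Qed.

Lemma F1int y1 y2 y3 : d4p (nrm3 y1 y2 y3) -> ~~ [&& evp y1, evp y2 & evp y3] ->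
  exists d (k : nat), (k < 3)%N /\
    [&& evp (ps y1 (patv d k 1)), evp (ps y2 (patv d k 2)) & evp (ps y3 (patv d k 3))].
Proof.
case: (red4p y1) => y1' m1 c1; case: (red4p y2) => y2' m2 c2; case: (red4p y3) => y3' m3 c3.
move=> hn he.
have H0 : d4p (nrm3 y1' y2' y3') && ~~ [&& evp y1', evp y2' & evp y3'].
  rewrite -(d4p_cong (cong_pa (cong_pa (cong_pm c1 c1) (cong_pm c2 c2)) (cong_pm c3 c3))) hn.
  by rewrite -(evp_cong (cong42 c1)) -(evp_cong (cong42 c2)) -(evp_cong (cong42 c3)) he.
move: (F1finL m1 m2 m3 H0).
move=> /hasP [d _ /hasP [k]]; rewrite mem_iota => /andP [_ hk] H.
exists d, k; split => //.
rewrite (evp_ps_cong (patv d k 1) (cong42 c1)) (evp_ps_cong (patv d k 2) (cong42 c2)).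
by rewrite (evp_ps_cong (patv d k 3) (cong42 c3)).
Qed.

Lemma half2 (z : int) : (2 %| z)%Z -> (z %/ 2)%Z + (z %/ 2)%Z = z.
Proof. move=> h. rewrite -[RHS](divzK h). ring. Qed.

Lemma pa_half w : evp w -> pa (halfp w) (halfp w) = w.
Proof.
case: w => w1 w2 /andP [h1 h2].
by rewrite /pa /halfp /= !half2.
Qed.

Lemma F2int y1 y2 y3 : d4p (nrm3 y1 y2 y3) -> ~~ [&& evp y1, evp y2 & evp y3] ->
  exists d (k : nat) s1 s2 s3, (k < 3)%N /\
    evp (dot3 y1 y2 y3 (bv d k s1 s2 s3 1) (bv d k s1 s2 s3 2) (bv d k s1 s2 s3 3)) /\
    forall u, pa u u = dot3 y1 y2 y3 (bv d k s1 s2 s3 1) (bv d k s1 s2 s3 2) (bv d k s1 s2 s3 3) ->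
    [&& evp (ps y1 (pm u (bv d k s1 s2 s3 1))), evp (ps y2 (pm u (bv d k s1 s2 s3 2)))
      & evp (ps y3 (pm u (bv d k s1 s2 s3 3)))].
Proof.
case: (red4p y1) => y1' m1 c1; case: (red4p y2) => y2' m2 c2; case: (red4p y3) => y3' m3 c3.
move=> hn he.
have H0 : d4p (nrm3 y1' y2' y3') && ~~ [&& evp y1', evp y2' & evp y3'].
  rewrite -(d4p_cong (cong_pa (cong_pa (cong_pm c1 c1) (cong_pm c2 c2)) (cong_pm c3 c3))) hn.
  by rewrite -(evp_cong (cong42 c1)) -(evp_cong (cong42 c2)) -(evp_cong (cong42 c3)) he.
move: (F2finL m1 m2 m3 H0).
move=> /hasP [d _ /hasP [k]]; rewrite mem_iota => /andP [_ hk].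
move=> /hasP [s1 _ /hasP [s2 _ /hasP [s3 _]]] H.
exists d, k, s1, s2, s3; split => //; move: H.
move: (bv d k s1 s2 s3 1) (bv d k s1 s2 s3 2) (bv d k s1 s2 s3 3) => b1 b2 b3 /=.
have cw : cong 4 (dot3 y1 y2 y3 b1 b2 b3) (dot3 y1' y2' y3' b1 b2 b3).
  by apply: cong_pa; [apply: cong_pa|]; apply: cong_pm => //; apply: cong_refl.
move: (dot3 y1 y2 y3 b1 b2 b3) (dot3 y1' y2' y3' b1 b2 b3) cw => W W' cw.
move=> /and4P [hw e1 e2 e3].
split.
  by rewrite (evp_cong (cong42 cw)).
move=> u hu.
have cu : cong 2 u (halfp W').
  have : cong 4 (pa u u) (pa (halfp W') (halfp W')) by rewrite hu (pa_half hw).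
  case: u {hu} => u1 u2; case: (halfp _) => v1 v2 [/= h1 h2].
  split.
    have e : u1 + u1 - (v1 + v1) = 2 * (u1 - v1) by ring.
    by rewrite -(@dvdz_mul2l 2) // -e.
  have e : u2 + u2 - (v2 + v2) = 2 * (u2 - v2) by ring.
  by rewrite -(@dvdz_mul2l 2) // -e.
have cb b : cong 2 b b by apply: cong_refl.
rewrite (evp_cong (cong_ps (cong42 c1) (cong_pm cu (cb b1)))).
rewrite (evp_cong (cong_ps (cong42 c2) (cong_pm cu (cb b2)))).
rewrite (evp_cong (cong_ps (cong42 c3) (cong_pm cu (cb b3)))).
by rewrite e1 e2 e3.
Qed.

Lemma no_sqrt5 (c d : int) : c ^+ 2 = 5 * d ^+ 2 -> d = 0.
Proof.
move=> h; apply/eqP; apply/negPn/negP => hd.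
have h' : (`|c| ^ 2 = 5 * `|d| ^ 2)%N by rewrite -abszX h abszM abszX.
have hD : (0 < `|d| ^ 2)%N by rewrite expn_gt0 absz_gt0 hd.
have := congr1 (logn 5) h'.
rewrite lognM // lognX lognX.
move=> e.
have : odd (2 * logn 5 `|c|) = odd (1 + 2 * logn 5 `|d|) by rewrite e.
by rewrite oddD !oddM.
Qed.

Section Real.
Variable R : rcfType.
Local Notation vec := 'rV[R]_4.
Local Notation tau := (tau R).
Local Notation tau' := (tau' R).
Local Notation sgn := (sgn R).
Local Notation unitv := (unitv R).

Lemma two_neq0 : (2 : R) != 0. Proof. by rewrite pnatr_eq0. Qed.
Lemma four_neq0 : (4 : R) != 0. Proof. by rewrite pnatr_eq0. Qed.

Lemma sqrt5_2 : Num.sqrt (5 : R) ^+ 2 = 5.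
Proof. by rewrite sqr_sqrtr // ler0n. Qed.

Lemma tau2 : tau ^+ 2 = tau + 1.
Proof.
apply/eqP; rewrite -subr_eq0 /Defs.tau.
have -> : ((1 + Num.sqrt (5:R)) / 2) ^+ 2 - ((1 + Num.sqrt 5) / 2 + 1) = (Num.sqrt (5:R) ^+ 2 - 5) / 4.
  by field; rewrite ?four_neq0 ?two_neq0 ?pnatr_eq0.
by rewrite sqrt5_2 subrr mul0r.
Qed.

Lemma tau'E : tau' = 1 - tau.
Proof. rewrite /Defs.tau' /Defs.tau. by field. Qed.

Lemma tau_sq : tau ^+ 2 + tau' ^+ 2 = 3.
Proof.
rewrite tau'E.
have -> : tau ^+ 2 + (1 - tau) ^+ 2 = 2 * tau ^+ 2 - 2 * tau + 1 by ring.
rewrite tau2; ring.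
Qed.

Definition zt (p : int * int) : R := p.1%:~R + p.2%:~R * tau.

Lemma ztE p : zt p = p.1%:~R + p.2%:~R * tau.
Proof. by []. Qed.

Lemma zt_pa p q : zt (pa p q) = zt p + zt q.
Proof. rewrite /zt /pa /= !intrD; ring. Qed.
Lemma zt_ps p q : zt (ps p q) = zt p - zt q.
Proof. rewrite /zt /ps /= !intrD !intrN; ring. Qed.
Lemma zt_pm p q : zt (pm p q) = zt p * zt q.
Proof.
rewrite /zt /pm /= !intrD !intrM.
move: (p.1%:~R) (p.2%:~R) (q.1%:~R) (q.2%:~R) => a b c d.
apply/eqP; rewrite -subr_eq0.
have -> : a * c + b * d + (a * d + b * c + b * d) * tau - (a + b * tau) * (c + d * tau)
  = b * d * (tau + 1 - tau ^+ 2) by ring.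
by rewrite tau2 subrr mulr0.
Qed.
Lemma zt_cone : zt cone = 1. Proof. by rewrite /zt /= mul0r addr0. Qed.
Lemma zt_ctau : zt ctau = tau. Proof. by rewrite /zt /= mul1r add0r. Qed.
Lemma zt_ctau' : zt ctau' = tau'. Proof. by rewrite /zt /= tau'E mulN1r. Qed.
Lemma zt_cz : zt cz = 0. Proof. by rewrite /zt /= mul0r addr0. Qed.
Lemma zt_sgnp s p : zt (sgnp s p) = sgn s * zt p.
Proof. case: s; rewrite /zt /sgn /= ?expr1 ?expr0 ?intrN; ring. Qed.
Lemma zt_intn (n : nat) p : n%:R * zt p = zt ((n%:R : int) * p.1, (n%:R : int) * p.2).
Proof. rewrite /zt /= !intrM !natz !pmulrn; ring. Qed.
Lemma zt_pa2 h : zt (pa h h) = 2 * zt h.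
Proof. rewrite zt_pa; ring. Qed.

Lemma zt0 a b : a%:~R + b%:~R * tau = 0 :> R -> a = 0 /\ b = 0.
Proof.
move=> h.
have hb : b = 0.
  apply: (@no_sqrt5 (2 * a + b)).
  have e : (2 * a + b)%:~R = - (b%:~R * Num.sqrt 5) :> R.
    rewrite intrD intrM.
    have : 2 * (a%:~R + b%:~R * tau) = 0 :> R by rewrite h mulr0.
    rewrite /Defs.tau => e'.
    apply/eqP; rewrite -subr_eq0; rewrite -e'. apply/eqP.
    by field.
  have s2 : Num.sqrt (5:R) * Num.sqrt 5 = 5 by rewrite -expr2 sqrt5_2.
  apply/eqP; rewrite !expr2 -(eqr_int R) !intrM e; apply/eqP.
  have -> : - (b%:~R * Num.sqrt 5) * - (b%:~R * Num.sqrt 5) = b%:~R * b%:~R * (Num.sqrt 5 * Num.sqrt 5) :> R by ring.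
  rewrite s2; ring.
split => //; move: h; rewrite hb mul0r addr0 => /eqP.
by rewrite intr_eq0 => /eqP.
Qed.

Lemma zt_inj p q : zt p = zt q -> p = q.
Proof.
move=> h; have : zt (ps p q) = 0 by rewrite zt_ps h subrr.
case: p q {h} => [a b] [c d]; rewrite /zt /= => /zt0 [/eqP h1 /eqP h2].
by move: h1 h2; rewrite !subr_eq0 => /eqP -> /eqP ->.
Qed.

Lemma inZtau_int (c : int) : inZtau (c%:~R : R).
Proof.
have h0 : inZtau (0 : R) by rewrite -(subrr (1:R)); apply: zt_add; [apply: zt_one|apply: zt_opp; apply: zt_one].
have hn (n : nat) : inZtau (n%:R : R).
  elim: n => // n ih; rewrite -addn1 natrD; apply: zt_add => //; exact: zt_one.
case: c => n; first by rewrite -pmulrn.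
by rewrite NegzE intrN -pmulrn; apply: zt_opp.
Qed.

Lemma zt_inZtau p : inZtau (zt p).
Proof. apply: zt_add; first exact: inZtau_int. apply: zt_mul; [exact: inZtau_int | exact: zt_tau]. Qed.

Lemma inZtau_zt z : inZtau z -> exists p, z = zt p.
Proof.
elim=> [|| x _ [p ->] | x y _ [p ->] _ [q ->] | x y _ [p ->] _ [q ->]].
- by exists cone; rewrite zt_cone.
- by exists ctau; rewrite zt_ctau.
- by exists (ps cz p); rewrite zt_ps zt_cz sub0r.
- by exists (pa p q); rewrite zt_pa.
- by exists (pm p q); rewrite zt_pm.
Qed.

Lemma evp_mod2 y c : evp (ps y c) -> eq_mod2 (zt y) (zt c).
Proof.
move=> h; exists (zt (halfp (ps y c))); split; first exact: zt_inZtau.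
by rewrite -zt_pa2 pa_half // zt_ps.
Qed.

Lemma mod2_evp y c : eq_mod2 (zt y) (zt c) -> evp (ps y c).
Proof.
move=> [z [/inZtau_zt [h ->] e]].
have : ps y c = pa h h by apply: zt_inj; rewrite zt_ps zt_pa2.
move=> ->; clear e; case: h => h1 h2; rewrite /evp /ev /pa /=.
have e1 : h1 + h1 = h1 * 2 by ring.
have e2 : h2 + h2 = h2 * 2 by ring.
by rewrite e1 e2 !dvdz_mull.
Qed.

Lemma inRR_zt z : inRR z -> exists k p, 2 ^+ k * z = zt p.
Proof.
elim=> [|||x _ [k [p e]]|x y _ [k1 [p e1]] _ [k2 [q e2]]|x y _ [k1 [p e1]] _ [k2 [q e2]]].
- by exists 0%N, cone; rewrite zt_cone expr0 mul1r.
- by exists 1%N, cone; rewrite zt_cone expr1 mul1r divff // two_neq0.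
- by exists 0%N, ctau; rewrite zt_ctau expr0 mul1r.
- by exists k, (ps cz p); rewrite zt_ps zt_cz sub0r -e mulrN.
- exists (k1 + k2)%N, (pa ((2 ^ k2)%:R * p.1, (2 ^ k2)%:R * p.2) ((2 ^ k1)%:R * q.1, (2 ^ k1)%:R * q.2)).
  rewrite zt_pa -!zt_intn -e1 -e2 !natrX exprD; ring.
- exists (k1 + k2)%N, (pm p q).
  rewrite zt_pm -e1 -e2 exprD; ring.
Qed.

End Real.

Definition i1 : 'I_4 := inord 1.
Definition i2 : 'I_4 := inord 2.
Definition i3 : 'I_4 := inord 3.
Lemma val_i1 : val i1 = 1%N. Proof. exact: inordK. Qed.
Lemma val_i2 : val i2 = 2%N. Proof. exact: inordK. Qed.
Lemma val_i3 : val i3 = 3%N. Proof. exact: inordK. Qed.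
Lemma val_i0 : val (0 : 'I_4) = 0%N. Proof. by []. Qed.
Definition valE := (val_i0, val_i1, val_i2, val_i3).

Lemma ord4 (j : 'I_4) : j = 0 \/ j = i1 \/ j = i2 \/ j = i3.
Proof.
case: j => [[|[|[|[|n]]]] hj] //.
- by left; apply/val_inj.
- by right; left; apply/val_inj; rewrite /= val_i1.
- by right; right; left; apply/val_inj; rewrite /= val_i2.
- by right; right; right; apply/val_inj; rewrite /= val_i3.
Qed.

Lemma sum4 (R : nmodType) (F : 'I_4 -> R) : \sum_(j < 4) F j = F 0 + F i1 + F i2 + F i3.
Proof.
rewrite !big_ord_recl big_ord0 addr0 !addrA.
have e1 : (lift ord0 ord0 : 'I_4) = i1 by apply/val_inj; rewrite /= val_i1.
have e2 : (lift ord0 (lift ord0 ord0) : 'I_4) = i2 by apply/val_inj; rewrite /= val_i2.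
have e3 : (lift ord0 (lift ord0 (lift ord0 ord0)) : 'I_4) = i3 by apply/val_inj; rewrite /= val_i3.
by rewrite e1 e2 e3.
Qed.

Section Vec.
Variable R : rcfType.
Local Notation vec := 'rV[R]_4.
Local Notation tau := (tau R).
Local Notation tau' := (tau' R).
Local Notation sgn := (sgn R).
Local Notation unitv := (unitv R).

Lemma dotE (x y : vec) : dot x y = x 0 0 * y 0 0 + x 0 i1 * y 0 i1 + x 0 i2 * y 0 i2 + x 0 i3 * y 0 i3.
Proof. by rewrite /dot sum4. Qed.

Lemma reflE (a x : vec) j : refl a x 0 j = x 0 j - 2 * dot x a * a 0 j.
Proof. by rewrite !mxE. Qed.

Lemma refl_dot (a x : vec) : dot a a = 1 -> dot (refl a x) (refl a x) = dot x x.
Proof.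
move=> h; rewrite (dotE (refl a x)) !reflE.
move: h; rewrite !dotE.
move: (x 0 0) (x 0 i1) (x 0 i2) (x 0 i3) (a 0 0) (a 0 i1) (a 0 i2) (a 0 i3) => x0 x1 x2 x3 a0 a1 a2 a3 h.
set D := x0 * a0 + x1 * a1 + x2 * a2 + x3 * a3.
have -> : (x0 - 2 * D * a0) * (x0 - 2 * D * a0) + (x1 - 2 * D * a1) * (x1 - 2 * D * a1) +
   (x2 - 2 * D * a2) * (x2 - 2 * D * a2) + (x3 - 2 * D * a3) * (x3 - 2 * D * a3)
   = x0 * x0 + x1 * x1 + x2 * x2 + x3 * x3 + 4 * D * D * (a0 * a0 + a1 * a1 + a2 * a2 + a3 * a3 - 1)
   by rewrite /D; ring.
by rewrite h subrr mulr0 addr0.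
Qed.

Lemma dot_refl_a (a x : vec) : dot a a = 1 -> dot (refl a x) a = - dot x a.
Proof.
move=> h; rewrite (dotE (refl a x)) !reflE.
move: h; rewrite !dotE.
move: (x 0 0) (x 0 i1) (x 0 i2) (x 0 i3) (a 0 0) (a 0 i1) (a 0 i2) (a 0 i3) => x0 x1 x2 x3 a0 a1 a2 a3 h.
set D := x0 * a0 + x1 * a1 + x2 * a2 + x3 * a3.
have -> : (x0 - 2 * D * a0) * a0 + (x1 - 2 * D * a1) * a1 + (x2 - 2 * D * a2) * a2 + (x3 - 2 * D * a3) * a3
   = - D - 2 * D * (a0 * a0 + a1 * a1 + a2 * a2 + a3 * a3 - 1) by rewrite /D; ring.
by rewrite h subrr mulr0 subr0.
Qed.

Lemma refl_invol (a x : vec) : dot a a = 1 -> refl a (refl a x) = x.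
Proof.
move=> h; apply/rowP => j; rewrite (reflE _ (refl a x)) dot_refl_a // reflE.
by rewrite mulrN mulNr opprK subrK.
Qed.

Lemma refl_inV (a x : vec) : inV a -> inV x -> inV (refl a x).
Proof. by rewrite /inV reflE => -> ->; rewrite mulr0 subr0. Qed.

Lemma sgn_sq b : sgn b * sgn b = 1.
Proof. by case: b; rewrite /Defs.sgn ?expr1 ?expr0 ?mulr1 ?mulrNN ?mulr1. Qed.

Lemma unitvE i j : unitv i 0 j = (j == i)%:R.
Proof. by rewrite mxE; case: (j == i). Qed.

Lemma Delta_unit t t' (v : vec) : t ^+ 2 + t' ^+ 2 = 3 -> Delta_gen t t' v -> dot v v = 1.
Proof.
move=> ht [[i [b ->]]|[[s ->]|[p [b1 [b2 [b3 [_ ->]]]]]]].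
- rewrite /dot (bigD1 i) //= big1 ?addr0.
    by rewrite !mxE eqxx mulr1 sgn_sq.
  by move=> j hj; rewrite !mxE (negbTE hj) mulr0 mul0r.
- rewrite dotE !mxE.
  have e b : sgn b / 2 * (sgn b / 2) = 1 / 4.
    have -> : sgn b / 2 * (sgn b / 2) = (sgn b * sgn b) / 4 by field.
    by rewrite sgn_sq.
  rewrite !e; by field.
- set w := [:: 0; sgn b1; sgn b2 * t'; sgn b3 * t].
  pose F := fun k : 'I_4 => nth 0 w k / 2 * (nth 0 w k / 2).
  transitivity (\sum_(j < 4) F (p j)).
    by rewrite /dot; apply: eq_bigr => j _; rewrite !mxE.
  rewrite -(@reindex_inj _ _ _ _ p xpredT F (@perm_inj _ p)) /F /w.
  rewrite sum4 /= !valE /=.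
  have e b (z : R) : sgn b * z / 2 * (sgn b * z / 2) = z ^+ 2 / 4.
    have -> : sgn b * z / 2 * (sgn b * z / 2) = (sgn b * sgn b) * (z ^+ 2 / 4) by field.
    by rewrite sgn_sq mul1r.
  rewrite !e.
  have e1 : sgn b1 / 2 * (sgn b1 / 2) = 1 / 4.
    have -> : sgn b1 / 2 * (sgn b1 / 2) = (sgn b1 * sgn b1) / 4 by field.
    by rewrite sgn_sq.
  rewrite e1.
  have -> : 0 / 2 * (0 / 2) + 1 / 4 + t' ^+ 2 / 4 + t ^+ 2 / 4 = (1 + (t ^+ 2 + t' ^+ 2)) / 4 :> R by field.
  by rewrite ht; field.
Qed.

End Vec.

Section Orb.
Variable R : rcfType.
Local Notation vec := 'rV[R]_4.
Local Notation tau := (tau R).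
Local Notation tau' := (tau' R).
Local Notation sgn := (sgn R).
Local Notation unitv := (unitv R).

Lemma rr0 : inRR (0 : R).
Proof. by rewrite -(subrr (1:R)); apply: rr_add; [apply: rr_one|apply: rr_opp; apply: rr_one]. Qed.
Lemma rr_sub (x y : R) : inRR x -> inRR y -> inRR (x - y).
Proof. by move=> hx hy; apply: rr_add => //; apply: rr_opp. Qed.
Lemma rr_nat n : inRR (n%:R : R).
Proof. elim: n => [|n ih]; first exact: rr0. by rewrite -addn1 natrD; apply: rr_add => //; apply: rr_one. Qed.
Lemma rr_sgn b : inRR (sgn b).
Proof. case: b; rewrite /Defs.sgn ?expr1 ?expr0; [apply: rr_opp|]; exact: rr_one. Qed.
Lemma rr_div2 (z : R) : inRR z -> inRR (z / 2).
Proof. move=> h; have -> : z / 2 = z * (1 / 2) by rewrite mul1r.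
by apply: rr_mul => //; exact: rr_half. Qed.
Lemma rr_tau' : inRR tau'.
Proof. rewrite tau'E; apply: rr_sub; [exact: rr_one | exact: rr_tau]. Qed.

Lemma Delta_RR t t' (v : vec) : inRR t -> inRR t' -> Delta_gen t t' v -> forall i, inRR (v 0 i).
Proof.
move=> ht ht' [[i [b ->]]|[[s ->]|[p [b1 [b2 [b3 [_ ->]]]]]]] j; rewrite !mxE.
- by apply: rr_mul; [exact: rr_sgn | case: (j == i); [exact: rr_one | exact: rr0]].
- by apply: rr_div2; exact: rr_sgn.
- apply: rr_div2; case: (p j) => [[|[|[|[|n]]]] hn] //=.
  + exact: rr0.
  + exact: rr_sgn.
  + by apply: rr_mul => //; exact: rr_sgn.
  + by apply: rr_mul => //; exact: rr_sgn.
Qed.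

Lemma refl_RR (a x : vec) : (forall i, inRR (a 0 i)) -> (forall i, inRR (x 0 i)) ->
  forall i, inRR (refl a x 0 i).
Proof.
move=> ha hx i; rewrite reflE dotE.
apply: rr_sub => //; apply: rr_mul => //; apply: rr_mul; first exact: rr_nat.
by repeat apply: rr_add; apply: rr_mul.
Qed.

Lemma DeltaU_props (y : vec) : DeltaU y -> dot y y = 1 /\ forall i, inRR (y 0 i).
Proof.
case=> h; split.
- by apply: Delta_unit h; exact: tau_sq.
- by apply: Delta_RR h; [exact: rr_tau | exact: rr_tau'].
- by apply: Delta_unit h; rewrite addrC; exact: tau_sq.
- by apply: Delta_RR h; [exact: rr_tau' | exact: rr_tau].
Qed.

Lemma Sigma_props (x : vec) : Sigma x -> dot x x = 1 /\ forall i, inRR (x 0 i).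
Proof.
move=> [g [y [hg [hy ->]]]].
elim: hg => [|a g' ha _ [ih1 ih2]] /=; first exact: DeltaU_props.
have [ha1 ha2] := DeltaU_props ha.
by split; [rewrite refl_dot | apply: refl_RR].
Qed.

Lemma Sigma3_Sigma (x : vec) : Sigma3 x -> Sigma x /\ inV x.
Proof.
move=> [g [y [hg [hy ->]]]]; split.
  exists g, y; split; last by split => //; case: hy => [[h _]|[h _]]; [left|right].
  elim: hg => [|a g' ha _ ih]; first exact: gen_id.
  by apply: gen_step => //; case: ha => [[h _]|[h _]]; [left|right].
elim: hg => [|a g' ha _ ih] /=; first by case: hy => [[_ h]|[_ h]].
by apply: refl_inV => //; case: ha => [[_ h]|[_ h]].
Qed.

End Orb.

Lemma i1_neq0 : i1 != 0. Proof. by rewrite -val_eqE !valE. Qed.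
Lemma i2_neq0 : i2 != 0. Proof. by rewrite -val_eqE !valE. Qed.
Lemma i3_neq0 : i3 != 0. Proof. by rewrite -val_eqE !valE. Qed.

Lemma base_int (a1 b1 a2 b2 a3 b3 : int) : nrm3 (a1, b1) (a2, b2) (a3, b3) = (1, 0) ->
  b1 = 0 /\ b2 = 0 /\ b3 = 0 /\
  ((a1 = 1 \/ a1 = -1) /\ a2 = 0 /\ a3 = 0 \/
   (a2 = 1 \/ a2 = -1) /\ a1 = 0 /\ a3 = 0 \/
   (a3 = 1 \/ a3 = -1) /\ a1 = 0 /\ a2 = 0).
Proof.
rewrite /nrm3 /pa /pm /= => [[h1 h2]].
have hb1 : b1 = 0 by nia.
have hb2 : b2 = 0 by nia.
have hb3 : b3 = 0 by nia.
subst b1 b2 b3; split; [done|split; [done|split; [done|]]].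
have {h1 h2} h : a1 * a1 + a2 * a2 + a3 * a3 = 1 by lia.
have sq0 (z w : int) : z * z + w * w = 0 -> z = 0 /\ w = 0 by move=> ?; split; nia.
have : a1 = 1 \/ a1 = -1 \/ a1 = 0 by nia.
case=> [e|[e|e]]; subst a1.
- by left; split; [left|apply: sq0; lia].
- by left; split; [right|apply: sq0; lia].
have : a2 = 1 \/ a2 = -1 \/ a2 = 0 by nia.
case=> [e|[e|e]]; subst a2.
- by right; left; split; [left|split; [done| have := sq0 0 a3; lia]].
- by right; left; split; [right|split; [done| have := sq0 0 a3; lia]].
have : a3 = 1 \/ a3 = -1 \/ a3 = 0 by nia.
case=> [e|[e|e]]; subst a3.
- by right; right; split; [left|].
- by right; right; split; [right|].
by move: h; rewrite !mulr0 !addr0.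
Qed.

Definition pk (k : nat) : {perm 'I_4} :=
  if k == 1%N then (tperm i1 i2 * tperm i1 i3)%g
  else if k == 2%N then (tperm i1 i3 * tperm i1 i2)%g else 1%g.

Lemma neq12 : i1 != i2. Proof. by rewrite -val_eqE !valE. Qed.
Lemma neq13 : i1 != i3. Proof. by rewrite -val_eqE !valE. Qed.
Lemma neq23 : i2 != i3. Proof. by rewrite -val_eqE !valE. Qed.
Lemma neq10 : i1 != 0. Proof. exact: i1_neq0. Qed.

Lemma pk_even k : ~~ odd_perm (pk k).
Proof.
rewrite /pk; case: ifP => _; first by rewrite odd_permM !odd_tperm neq12 neq13.
case: ifP => _; first by rewrite odd_permM !odd_tperm neq12 neq13.
by rewrite odd_perm1.
Qed.

Lemma n32 : i3 != i2. Proof. by rewrite eq_sym neq23. Qed.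
Lemma pk0 : pk 0 = 1%g. Proof. by []. Qed.
Lemma pk1 : pk 1 = (tperm i1 i2 * tperm i1 i3)%g. Proof. by []. Qed.
Lemma pk2 : pk 2 = (tperm i1 i3 * tperm i1 i2)%g. Proof. by []. Qed.

Lemma pk_val k j : (k < 3)%N -> val (pk k j) = qk k (val j).
Proof.
case: k => [|[|[|//]]] _.
- by rewrite pk0 perm1.
- rewrite pk1 permM; case: (ord4 j) => [->|[->|[->|->]]].
  + by rewrite (tpermD i1_neq0 i2_neq0) (tpermD i1_neq0 i3_neq0).
  + by rewrite tpermL (tpermD neq12 n32) !valE.
  + by rewrite tpermR tpermL !valE.
  + by rewrite (tpermD neq13 neq23) tpermR !valE.
- rewrite pk2 permM; case: (ord4 j) => [->|[->|[->|->]]].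
  + by rewrite (tpermD i1_neq0 i3_neq0) (tpermD i1_neq0 i2_neq0).
  + by rewrite tpermL (tpermD neq13 neq23) !valE.
  + by rewrite (tpermD neq12 n32) tpermR !valE.
  + by rewrite tpermR tpermL !valE.
Qed.


Section Main.
Variable R : rcfType.
Local Notation vec := 'rV[R]_4.
Local Notation tau := (tau R).
Local Notation tau' := (tau' R).
Local Notation sgn := (sgn R).
Local Notation unitv := (unitv R).
Local Notation zt := (zt R).

Definition intl n (x : vec) := forall j : 'I_4, j != 0 -> exists p, 2 ^+ n * x 0 j = zt p.
Definition unitV (x : vec) := inV x /\ dot x x = 1.

Lemma coords n x : intl n x -> exists y1 y2 y3,
  [/\ 2 ^+ n * x 0 i1 = zt y1, 2 ^+ n * x 0 i2 = zt y2 & 2 ^+ n * x 0 i3 = zt y3].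
Proof.
move=> h; case: (h _ i1_neq0) => y1 e1; case: (h _ i2_neq0) => y2 e2; case: (h _ i3_neq0) => y3 e3.
by exists y1, y2, y3.
Qed.

Lemma int4X n : (((4:int) ^+ n)%:~R : R) = 4 ^+ n.
Proof. elim: n => [|n ih]; first by rewrite !expr0. by rewrite !exprS intrM ih. Qed.

Lemma nrm_eq n (x : vec) y1 y2 y3 : unitV x -> 2 ^+ n * x 0 i1 = zt y1 -> 2 ^+ n * x 0 i2 = zt y2 ->
  2 ^+ n * x 0 i3 = zt y3 -> nrm3 y1 y2 y3 = ((4:int) ^+ n, 0).
Proof.
move=> [h0 h1] e1 e2 e3; apply: (@zt_inj R).
rewrite /nrm3 !zt_pa !zt_pm -e1 -e2 -e3.
rewrite ztE /= mul0r addr0 int4X.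
move: h1; rewrite dotE /inV in h0 *; rewrite h0 mul0r add0r => h1.
have -> : 2 ^+ n * x 0 i1 * (2 ^+ n * x 0 i1) + 2 ^+ n * x 0 i2 * (2 ^+ n * x 0 i2) +
   2 ^+ n * x 0 i3 * (2 ^+ n * x 0 i3) =
   (2 ^+ n * 2 ^+ n) * (x 0 i1 * x 0 i1 + x 0 i2 * x 0 i2 + x 0 i3 * x 0 i3) :> R by ring.
rewrite h1 mulr1 -exprMn; congr (_ ^+ _); ring.
Qed.

Lemma half_coord n (X : R) y : 2 ^+ n.+1 * X = zt y -> evp y -> 2 ^+ n * X = zt (halfp y).
Proof.
move=> e v; apply: (@mulfI R 2); first exact: two_neq0.
 rewrite -zt_pa2 pa_half // -e exprS; ring.
Qed.

Lemma intl_half n (x : vec) y1 y2 y3 : 2 ^+ n.+1 * x 0 i1 = zt y1 -> 2 ^+ n.+1 * x 0 i2 = zt y2 ->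
  2 ^+ n.+1 * x 0 i3 = zt y3 -> evp y1 -> evp y2 -> evp y3 -> intl n x.
Proof.
move=> e1 e2 e3 v1 v2 v3 j; case: (ord4 j) => [->|[->|[->|->]]]; first by rewrite eqxx.
- by move=> _; exists (halfp y1); apply: half_coord.
- by move=> _; exists (halfp y2); apply: half_coord.
- by move=> _; exists (halfp y3); apply: half_coord.
Qed.

Lemma scale_unitvE b i j : (sgn b *: unitv i) 0 j = if j == i then sgn b else 0.
Proof. by rewrite !mxE; case: (j == i); rewrite ?mulr1 ?mulr0. Qed.

Lemma rowE4 (x y : vec) : x 0 0 = y 0 0 -> x 0 i1 = y 0 i1 -> x 0 i2 = y 0 i2 -> x 0 i3 = y 0 i3 -> x = y.
Proof.
move=> h0 h1 h2 h3; apply/rowP => j.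
by case: (ord4 j) => [->|[->|[->|->]]].
Qed.

Lemma base_vec (x : vec) : unitV x -> intl 0 x -> exists i b, i != 0 /\ x = sgn b *: unitv i.
Proof.
move=> hx hi; case: (coords hi) => y1 [y2 [y3 [e1 e2 e3]]].
have hn := nrm_eq hx e1 e2 e3; rewrite expr0 in hn.
rewrite !expr0 !mul1r in e1 e2 e3.
case: hx => h0 _.
move: e1 e2 e3 hn; case: y1 => a1 b1; case: y2 => a2 b2; case: y3 => a3 b3 e1 e2 e3 /base_int.
move=> [hb1 [hb2 [hb3 hc]]]; subst b1 b2 b3.
have zz : zt (0, 0) = 0 by rewrite ztE /= mul0r addr0.
have sE : forall (a : int), a = 1 \/ a = -1 -> exists b, zt (a, 0) = sgn b.
  by move=> a [->|->]; [exists false | exists true]; rewrite ztE /Defs.sgn /= ?expr0 ?expr1 mul0r addr0.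
case: hc => [[ha [h2 h3]]|[[ha [h1 h3]]|[ha [h1 h2]]]]; subst.
- case: (sE _ ha) => b hb; exists i1, b; split; first exact: i1_neq0.
  apply: rowE4; rewrite !scale_unitvE -!val_eqE !valE //=.
  all: try first [exact h0 | (by rewrite e1 hb) | (by rewrite e2 hb) | (by rewrite e3 hb) | (by rewrite e1 zz) | (by rewrite e2 zz) | (by rewrite e3 zz)].
- case: (sE _ ha) => b hb; exists i2, b; split; first exact: i2_neq0.
  apply: rowE4; rewrite !scale_unitvE -!val_eqE !valE //=.
  all: try first [exact h0 | (by rewrite e1 hb) | (by rewrite e2 hb) | (by rewrite e3 hb) | (by rewrite e1 zz) | (by rewrite e2 zz) | (by rewrite e3 zz)].
- case: (sE _ ha) => b hb; exists i3, b; split; first exact: i3_neq0.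
  apply: rowE4; rewrite !scale_unitvE -!val_eqE !valE //=.
  all: try first [exact h0 | (by rewrite e1 hb) | (by rewrite e2 hb) | (by rewrite e3 hb) | (by rewrite e1 zz) | (by rewrite e2 zz) | (by rewrite e3 zz)].
Qed.


Lemma intl_inZ n (x : vec) : intl n x -> forall j : 'I_4, j != 0 -> inZtau (2 ^+ n * x 0 j).
Proof. by move=> h j hj; case: (h j hj) => p ->; apply: zt_inZtau. Qed.

Lemma d4p_pow n : d4p ((4:int) ^+ n.+1, 0).
Proof. by rewrite /d4p /= exprS dvdz_mulr ?dvdzz // dvdz0. Qed.

Lemma patmem0 k : (k < 3)%N ->
  (zt (patv false k 1), zt (patv false k 2), zt (patv false k 3)) \in pat tau tau'.
Proof.
case: k => [|[|[|//]]] _; rewrite /patv /bv /wl /=.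
all: by rewrite zt_cone zt_ctau zt_ctau' !inE eqxx ?orbT.
Qed.

Lemma patmem1 k : (k < 3)%N ->
  (zt (patv true k 1), zt (patv true k 2), zt (patv true k 3)) \in pat tau' tau.
Proof.
case: k => [|[|[|//]]] _; rewrite /patv /bv /wl /=.
all: by rewrite zt_cone zt_ctau zt_ctau' !inE eqxx ?orbT.
Qed.

Lemma C_main n : forall x : vec, unitV x -> intl n x -> exists m, S3 m x \/ S3' m x.
Proof.
elim: n => [|n IH] x hx hi.
  by case: (base_vec hx hi) => i [b [hi0 ->]]; exists 0%N; left; exists i, b.
case: (coords hi) => y1 [y2 [y3 [e1 e2 e3]]].
case he: [&& evp y1, evp y2 & evp y3].
  by move/and3P: he => [v1 v2 v3]; exact: IH x hx (intl_half e1 e2 e3 v1 v2 v3).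
have hd : d4p (nrm3 y1 y2 y3) by rewrite (nrm_eq hx e1 e2 e3) d4p_pow.
case: (F1int hd (negbT he)) => d [k [hk /and3P [p1 p2 p3]]].
have m1 := evp_mod2 R p1; have m2 := evp_mod2 R p2; have m3 := evp_mod2 R p3.
rewrite -e1 in m1; rewrite -e2 in m2; rewrite -e3 in m3.
exists n.+1; case: hx => hx0 hx1.
case: d p1 p2 p3 m1 m2 m3 => p1 p2 p3 m1 m2 m3; [right|left].
  split => //; split => //; split; first exact: intl_inZ.
  by exists (zt (patv true k 1)), (zt (patv true k 2)), (zt (patv true k 3)); split; [exact: patmem1|].
split => //; split => //; split; first exact: intl_inZ.
by exists (zt (patv false k 1)), (zt (patv false k 2)), (zt (patv false k 3)); split; [exact: patmem0|].
Qed.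

End Main.

Section Desc.
Variable R : rcfType.
Local Notation vec := 'rV[R]_4.
Local Notation tau := (tau R).
Local Notation tau' := (tau' R).
Local Notation sgn := (sgn R).
Local Notation unitv := (unitv R).
Local Notation zt := (zt R).

Definition wR (d s1 s2 s3 : bool) : seq R :=
  [:: 0; sgn s1; sgn s2 * (if d then tau else tau'); sgn s3 * (if d then tau' else tau)].

Lemma nth_zt d s1 s2 s3 m : nth 0 (wR d s1 s2 s3) m = zt (nth cz (wl d s1 s2 s3) m).
Proof.
case: m => [|[|[|[|m]]]] /=.
- by rewrite zt_cz.
- by rewrite zt_sgnp zt_cone mulr1.
- by rewrite zt_sgnp; case: d; rewrite ?zt_ctau ?zt_ctau'.
- by rewrite zt_sgnp; case: d; rewrite ?zt_ctau ?zt_ctau'.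
- by rewrite !nth_nil zt_cz.
Qed.

Definition avec d k s1 s2 s3 : vec := \row_j (nth 0 (wR d s1 s2 s3) (pk k j) / 2).

Lemma avec_Delta d k s1 s2 s3 : (k < 3)%N -> Delta3U (avec d k s1 s2 s3).
Proof.
move=> hk.
have h0 : inV (avec d k s1 s2 s3).
  rewrite /inV /avec mxE (pk_val _ hk) /=.
  have -> : qk k 0 = 0%N by case: k hk => [|[|[|]]].
  by rewrite mul0r.
move: h0; case: d => h0; [right|left]; split => //; right; right; exists (pk k), s1, s2, s3; split => //; exact: pk_even.
Qed.

Lemma avec2 d k s1 s2 s3 (j : 'I_4) : (k < 3)%N ->
  2 * avec d k s1 s2 s3 0 j = zt (bv d k s1 s2 s3 j).
Proof.
move=> hk; rewrite /avec mxE (pk_val _ hk) nth_zt /bv.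
by rewrite mulrC -mulrA mulVf ?mulr1 // two_neq0.
Qed.

Lemma desc_alg (P X0 X1 X2 X3 A0 A1 A2 A3 Y1 Y2 Y3 B1 B2 B3 U H Xj Aj Yj Bj : R) :
  X0 = 0 ->
  2 * P * X1 = Y1 -> 2 * P * X2 = Y2 -> 2 * P * X3 = Y3 ->
  2 * A1 = B1 -> 2 * A2 = B2 -> 2 * A3 = B3 ->
  2 * U = Y1 * B1 + Y2 * B2 + Y3 * B3 ->
  2 * P * Xj = Yj -> 2 * Aj = Bj -> 2 * H = Yj - U * Bj ->
  P * (Xj - 2 * (X0 * A0 + X1 * A1 + X2 * A2 + X3 * A3) * Aj) = H.
Proof.
move=> -> <- <- <- <- <- <- hU <- <- hH.
have hU' : U = 2 * P * (X1 * A1 + X2 * A2 + X3 * A3).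
  apply: (@mulfI R 2); first exact: two_neq0.
  rewrite hU; ring.
apply: (@mulfI R 2); first exact: two_neq0.
rewrite hH hU'; ring.
Qed.

Arguments desc_alg {P X0 X1 X2 X3 A0 A1 A2 A3 Y1 Y2 Y3 B1 B2 B3 U H Xj Aj Yj Bj}.

Lemma D_main n : forall x : vec, unitV x -> intl n x -> Sigma3 x.
Proof.
elim: n => [|n IH] x hx hi.
  case: (base_vec hx hi) => i [b [hi0 ->]].
  exists id, (sgn b *: unitv i); split; first exact: gen_id.
  split => //; left; split; first by left; exists i, b.
  by rewrite /inV scale_unitvE eq_sym (negbTE hi0).
case: (coords hi) => y1 [y2 [y3 [e1 e2 e3]]].
case he: [&& evp y1, evp y2 & evp y3].
  by move/and3P: he => [v1 v2 v3]; exact: IH x hx (intl_half e1 e2 e3 v1 v2 v3).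
have hd : d4p (nrm3 y1 y2 y3) by rewrite (nrm_eq hx e1 e2 e3) d4p_pow.
case: (F2int hd (negbT he)) => d [k [s1 [s2 [s3 [hk [hw hu]]]]]].
set a := avec d k s1 s2 s3.
have ha : Delta3U a by exact: avec_Delta.
have haa : dot a a = 1.
  by case: ha => [[h _]|[h _]]; case: (DeltaU_props (or_introl h)) + case: (DeltaU_props (or_intror h)).
have ha0 : a 0 0 = 0 by case: ha => [[_ h]|[_ h]].
have hb j : 2 * a 0 j = zt (bv d k s1 s2 s3 j) by exact: avec2.
set u := halfp (dot3 y1 y2 y3 (bv d k s1 s2 s3 1) (bv d k s1 s2 s3 2) (bv d k s1 s2 s3 3)).
move: (hu u (pa_half hw)) => /and3P [q1 q2 q3].
case: hx => hx0 hx1.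
have hU : 2 * zt u = zt y1 * zt (bv d k s1 s2 s3 1) + zt y2 * zt (bv d k s1 s2 s3 2)
   + zt y3 * zt (bv d k s1 s2 s3 3).
  by rewrite -zt_pa2 pa_half // /dot3 !zt_pa !zt_pm.
have hP (X : R) y : 2 ^+ n.+1 * X = zt y -> 2 * 2 ^+ n * X = zt y by rewrite exprS.
have hb1 := hb i1; have hb2 := hb i2; have hb3 := hb i3.
rewrite !valE in hb1 hb2 hb3.
have hi' : intl n (refl a x).
  move=> j; case: (ord4 j) => [->|[->|[->|->]]]; first by rewrite eqxx.
  - move=> _; exists (halfp (ps y1 (pm u (bv d k s1 s2 s3 1)))).
    rewrite reflE dotE.
    apply: (desc_alg hx0 (hP _ _ e1) (hP _ _ e2) (hP _ _ e3) hb1 hb2 hb3 hU (hP _ _ e1) hb1).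
    by rewrite -zt_pa2 pa_half // zt_ps zt_pm.
  - move=> _; exists (halfp (ps y2 (pm u (bv d k s1 s2 s3 2)))).
    rewrite reflE dotE.
    apply: (desc_alg hx0 (hP _ _ e1) (hP _ _ e2) (hP _ _ e3) hb1 hb2 hb3 hU (hP _ _ e2) hb2).
    by rewrite -zt_pa2 pa_half // zt_ps zt_pm.
  - move=> _; exists (halfp (ps y3 (pm u (bv d k s1 s2 s3 3)))).
    rewrite reflE dotE.
    apply: (desc_alg hx0 (hP _ _ e1) (hP _ _ e2) (hP _ _ e3) hb1 hb2 hb3 hU (hP _ _ e3) hb3).
    by rewrite -zt_pa2 pa_half // zt_ps zt_pm.
have hx' : unitV (refl a x).
  split; [apply: refl_inV | rewrite refl_dot] => //.
case: (IH _ hx' hi') => g [y [hg [hy ex]]].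
exists (refl a \o g), y; split; first exact: gen_step.
by split => //=; rewrite -ex refl_invol.
Qed.

End Desc.

Section Fin.
Variable R : rcfType.
Local Notation vec := 'rV[R]_4.
Local Notation zt := (zt R).

Lemma lift_le k K (X : R) p : 2 ^+ k * X = zt p -> (k <= K)%N -> exists q, 2 ^+ K * X = zt q.
Proof.
move=> e hk; exists ((2 ^ (K - k))%:R * p.1, (2 ^ (K - k))%:R * p.2).
by rewrite -zt_intn -e natrX mulrA -exprD subnK.
Qed.

Lemma intl_of_RR (x : vec) : (forall i, inRR (x 0 i)) -> exists K, intl K x.
Proof.
move=> h.
case: (inRR_zt (h i1)) => k1 [p1 e1]; case: (inRR_zt (h i2)) => k2 [p2 e2].
case: (inRR_zt (h i3)) => k3 [p3 e3].
exists (k1 + k2 + k3)%N => j; case: (ord4 j) => [->|[->|[->|->]]]; first by rewrite eqxx.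
- by move=> _; apply: lift_le e1 _; rewrite -addnA leq_addr.
- by move=> _; apply: lift_le e2 _; rewrite addnAC leq_addl.
- by move=> _; apply: lift_le e3 _; rewrite leq_addl.
Qed.

Lemma sphere_S (x : vec) : sphereV_R x -> exists n, S3 n x \/ S3' n x.
Proof.
move=> [h0 [h1 h2]]; case: (intl_of_RR h2) => K hK.
by apply: (C_main (n:=K)) => //; split.
Qed.

Lemma Sn_Sigma3 P n (x : vec) : Sn_gen P n x -> Sigma3 x.
Proof.
case: n => [|n].
  move=> [i [b [hi0 ->]]].
  exists id, (sgn R b *: unitv R i); split; first exact: gen_id.
  split => //; left; split; first by left; exists i, b.
  by rewrite /inV scale_unitvE eq_sym (negbTE hi0).
move=> [h0 [h1 [h2 _]]].
apply: (D_main (n:=n.+1)); first by split.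
by move=> j hj; case: (inZtau_zt (h2 j hj)) => p e; exists p.
Qed.

Lemma Sigma3_sphere (x : vec) : Sigma3 x -> sphereV_R x.
Proof.
move=> /Sigma3_Sigma [hs hv]; case: (Sigma_props hs) => h1 h2.
by split => //; split.
Qed.

End Fin.

Theorem mainTheorem8 (R : rcfType) (x : 'rV[R]_4) :
  (Sigma3 x <-> exists n : nat, S3 n x \/ S3' n x) /\
  ((exists n : nat, S3 n x \/ S3' n x) <-> sphereV_R x) /\
  (sphereV_R x <-> Sigma x /\ inV x).
Proof.
have U2S : (exists n : nat, S3 n x \/ S3' n x) -> Sigma3 x.
  by move=> [n [h|h]]; apply: Sn_Sigma3 h.
split; [split|split; [split|split]].
- by move/Sigma3_sphere; apply: sphere_S.
- exact: U2S.
- by move/U2S; apply: Sigma3_sphere.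
- exact: sphere_S.
- by move/sphere_S/U2S; apply: Sigma3_Sigma.
- move=> [hs hv]; case: (Sigma_props hs) => h1 h2.
  by split => //; split.
Qed.
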